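(* In the Standing Setup with $R=u(X^2-vX+w)$ ($u,v,w\in\mathbb F$), for every $h\in\mathbb Z$: $$(d_{h-1}d_h+u)(d_hd_{h+1}+u)=-u\,d_h\,(e_h^2+ve_h+w).$$
   Context: Standing Setup. $\mathbb F$ is a field of characteristic not $2$ or $3$; $f,g\in\mathbb F$; $A=X^3+fX+g\in\mathbb F[X]$; $R\in\mathbb F[X]$ is a polynomial of degree at most $2$; $D=A^2+4R$; $Y$ satisfies $Y^2=D(X)$, $Z=\tfrac12(Y+A)$ and $\overline Z=\tfrac12(-Y+A)$, so $Z+\overline Z=A$ and $Z\overline Z=-R$. We are given sequences $(u_h),(v_h),(w_h),(d_h),(e_h)$ of elements of $\mathbb F$ indexed by $h\in\mathbb Z$, with all $u_h\neq0$, such that for every $h\in\mathbb Z$ the following two identities hold in $\mathbb F[X]$: (i) $A+d_h(X+e_h)+d_{h+1}(X+e_{h+1})=(X+v_h)(X^2-v_hX+w_h)$; (ii) $-u_hu_{h+1}(X^2-v_hX+w_h)(X^2-v_{h+1}X+w_{h+1})=d_{h+1}^2(X+e_{h+1})^2+d_{h+1}(X+e_{h+1})A-R$. (These say that $Z_h=\bigl(Z+d_h(X+e_h)\bigr)/\bigl(u_h(X^2-v_hX+w_h)\bigr)$ are consecutive complete quotients of a continued fraction expansion with partial quotients $(X+v_h)/u_h$.) *)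

(* Defs.v *)
From mathcomp Require Import all_boot all_order all_algebra.
Set Implicit Arguments. Unset Strict Implicit. Unset Printing Implicit Defensive.
Import GRing.Theory.
Local Open Scope ring_scope.

Definition cubicA (F : fieldType) (f g : F) : {poly F} := 'X^3 + f *: 'X + g%:P.
Definition quadp (F : fieldType) (a b : F) : {poly F} := 'X^2 - a *: 'X + b%:P.
Definition linp (F : fieldType) (c : F) : {poly F} := 'X + c%:P.

(* Main.v *)
Require Import Defs.
From mathcomp Require Import all_boot all_order all_algebra.
From mathcomp Require Import ring.
Import GRing.Theory.
Local Open Scope ring_scope.
Set Implicit Arguments. Unset Strict Implicit.
Definition nf {F : fieldType} (c0 c1 c2 c3 c4 : F) : {poly F} :=
  c0%:P + c1%:P * 'X + c2%:P * 'X^2 + c3%:P * 'X^3 + c4%:P * 'X^4.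

Lemma nf0 (F : fieldType) (c0 c1 c2 c3 c4 : F) : nf c0 c1 c2 c3 c4 = 0 ->
  [/\ c0 = 0, c1 = 0, c2 = 0, c3 = 0 & c4 = 0].
Proof.
move=> H.
have K k : (nf c0 c1 c2 c3 c4)`_k = 0 by rewrite H coef0.
have := K 0%N; have := K 1%N; have := K 2%N; have := K 3%N; have := K 4%N.
rewrite /nf !coefD !coefCM !coefXn !coefX !coefC /=.
by rewrite !(mulr0, mulr1, addr0, add0r) => -> -> -> -> ->.
Qed.

Lemma Li (F : fieldType) (f g d1 e1 d2 e2 v w : F) :
  cubicA f g + d1 *: linp e1 + d2 *: linp e2 = linp v * quadp v w ->
  f + d1 + d2 - w + v ^+ 2 = 0.
Proof.
move=> H.
have : nf (g + d1 * e1 + d2 * e2 - v * w) (f + d1 + d2 - w + v ^+ 2) 0 0 0 = 0.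
  rewrite -(subrr (linp v * quadp v w)) -{1}H /nf /cubicA /linp /quadp -!mul_polyC.
  rewrite ?rmorphD ?rmorphM ?rmorphN ?rmorphB /=. ring.
by case/nf0.
Qed.

Lemma Lii (F : fieldType) (f g P a b c dd d e u v w : F) :
  - P *: (quadp a b * quadp c dd)
     = d ^+ 2 *: linp e ^+ 2 + d *: linp e * cubicA f g - u *: quadp v w ->
  [/\ - P * b * dd - d^+2 * e^+2 - d * e * g + u * w = 0,
      P * (a * dd + b * c) - 2%:R * d^+2 * e - d * (e * f + g) - u * v = 0,
      - P * (dd + a * c + b) - d^+2 - d * f + u = 0,
      P * (a + c) - d * e = 0 & - P - d = 0].
Proof.
move=> H.
have : nf (- P * b * dd - d^+2 * e^+2 - d * e * g + u * w)
   (P * (a * dd + b * c) - 2%:R * d^+2 * e - d * (e * f + g) - u * v)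
   (- P * (dd + a * c + b) - d^+2 - d * f + u)
   (P * (a + c) - d * e) (- P - d) = 0.
  rewrite -(subrr (- P *: (quadp a b * quadp c dd))) {2}H /nf /cubicA /linp /quadp -!mul_polyC.
  rewrite ?rmorphD ?rmorphM ?rmorphN ?rmorphB ?rmorphXn /= ?rmorph_nat. ring.
by case/nf0.
Qed.

Lemma lin0 (F : fieldType) (k x y z : F) : x = y + k * z -> z = 0 -> x = y.
Proof. by move=> -> ->; rewrite mulr0 addr0. Qed.

Lemma lin5 (F : fieldType) (k0 k1 k2 k3 k4 x y z0 z1 z2 z3 z4 : F) :
  x = y + k0 * z0 + k1 * z1 + k2 * z2 + k3 * z3 + k4 * z4 ->
  z0 = 0 -> z1 = 0 -> z2 = 0 -> z3 = 0 -> z4 = 0 -> x = y.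
Proof. by move=> -> -> -> -> -> ->; rewrite !mulr0 !addr0. Qed.

Theorem mainTheorem6 (F : fieldType) (f g u v w : F)
    (us vs ws ds es : int -> F) :
  (2%:R : F) != 0 -> (3%:R : F) != 0 ->
  (forall h : int, us h != 0) ->
  (forall h : int,
     cubicA f g + ds h *: linp (es h) + ds (h + 1) *: linp (es (h + 1))
     = linp (vs h) * quadp (vs h) (ws h)) ->
  (forall h : int,
     - (us h * us (h + 1)) *: (quadp (vs h) (ws h) * quadp (vs (h + 1)) (ws (h + 1)))
     = ds (h + 1) ^+ 2 *: linp (es (h + 1)) ^+ 2
       + ds (h + 1) *: linp (es (h + 1)) * cubicA f g
       - u *: quadp v w) ->
  forall h : int,
    (ds (h - 1) * ds h + u) * (ds h * ds (h + 1) + u)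
    = - u * ds h * (es h ^+ 2 + v * es h + w).
Proof.
move=> _ _ Hu Hi Hii h.
have W1 := Li (Hi (h - 1)); rewrite subrK in W1.
have W2 := Li (Hi h).
have := Lii (Hii (h - 1)); rewrite subrK.
set P := us (h - 1) * us h.
case=> C0 C1 C2 C3 C4.
have PN : P != 0 by rewrite mulf_neq0.
have D : ds h = - P by apply: (lin0 (k:=-1)) C4; ring.
have Ee : es h = - (vs (h - 1) + vs h).
  apply: (mulfI PN); apply: (lin0 (k:=1)) C3; rewrite D; ring.
have Ev : P * (es h ^+ 2 + vs (h - 1) * es h + ws (h - 1)) * (es h ^+ 2 + vs h * es h + ws h)
          = u * (es h ^+ 2 + v * es h + w).
  apply: (lin5 (k0:=-1) (k1:=es h) (k2:= - es h ^+ 2) (k3 := es h ^+ 3) (k4 := - es h ^+ 4)) C0 C1 C2 C3 C4.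
  ring.
have WA : ws (h - 1) = f + ds (h - 1) + ds h + vs (h - 1) ^+ 2.
  by apply: (lin0 (k:=-1)) W1; ring.
have WB : ws h = f + ds h + ds (h + 1) + vs h ^+ 2.
  by apply: (lin0 (k:=-1)) W2; ring.
have U : u = P * (ws h + vs (h - 1) * vs h + ws (h - 1)) + ds h ^+ 2 + ds h * f.
  by apply: (lin0 (k:=1)) C2; ring.
rewrite (_ : - u * ds h * _ = - ds h * (u * (es h ^+ 2 + v * es h + w))); last by ring.
rewrite -Ev.
rewrite U WA WB D Ee.
ring.
Qed.
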